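(* Let $(\mathcal F_n)_{n\ge1}$ be a nested sequence of predictor classes such that for every $n$ and every $f_1,f_2\in\mathcal F_n$, the midpoint predictor $\tfrac12(f_1+f_2)$ lies in $\mathcal F_{2n}$. Fix $n\ge1$ and suppose $f_1,f_2\in\mathcal F_n$ satisfy $\mathrm{MSE}(f_i)\le R(\mathcal F_n)+\varepsilon$ for $i\in\{1,2\}$. Then \[ D(f_1,f_2)\le4\big(R(\mathcal F_n)-R(\mathcal F_{2n})+\varepsilon\big). \]
   Context: $P$ is a distribution on $\mathcal X\times\mathcal Y$ with $\mathcal Y\subseteq\mathbb R$; predictors are square-integrable functions $\mathcal X\to\mathbb R$; expectations over $(x,y)\sim P$. $\mathrm{MSE}(f)=\mathbb E[(y-f(x))^2]$, $R(\mathcal F)=\inf_{f\in\mathcal F}\mathrm{MSE}(f)$, $D(f_1,f_2)=\mathbb E[(f_1(x)-f_2(x))^2]$. Nested means $\mathcal F_n\subseteq\mathcal F_{n+1}$. *)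

(* Defs.v *)
From HB Require Import structures.
From mathcomp Require Import all_boot all_order all_algebra.
From mathcomp Require Import all_classical all_reals all_analysis.
Set Implicit Arguments. Unset Strict Implicit. Unset Printing Implicit Defensive.
Import Order.TTheory GRing.Theory Num.Theory.
Local Open Scope classical_set_scope.
Local Open Scope ring_scope.
Local Open Scope ereal_scope.

(* P is a probability distribution on X * R (Y is a subset of R, so a
   distribution on X x Y is a distribution on X x R). *)

Definition predictor {d} {X : measurableType d} {R : realType}
  (P : probability (X * R)%type R) (f : X -> R) : Prop :=
  measurable_fun setT f /\ P.-integrable setT (fun z => ((f z.1) ^+ 2)%:E).

Definition MSE {d} {X : measurableType d} {R : realType}
  (P : probability (X * R)%type R) (f : X -> R) : \bar R :=
  \int[P]_z (((z.2 - f z.1) ^+ 2)%R)%:E.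

Definition Risk {d} {X : measurableType d} {R : realType}
  (P : probability (X * R)%type R) (F : set (X -> R)) : \bar R :=
  ereal_inf [set MSE P f | f in F].

Definition Dist {d} {X : measurableType d} {R : realType}
  (P : probability (X * R)%type R) (f1 f2 : X -> R) : \bar R :=
  \int[P]_z (((f1 z.1 - f2 z.1) ^+ 2)%R)%:E.

(* Main.v *)
Require Import Defs.
From HB Require Import structures.
From mathcomp Require Import all_boot all_order all_algebra.
From mathcomp Require Import all_classical all_reals all_analysis.
From mathcomp Require Import ring lra measurable_realfun.
Import Order.TTheory GRing.Theory Num.Theory.
Local Open Scope classical_set_scope.
Local Open Scope ring_scope.
Local Open Scope ereal_scope.

Section Aux.
Context (d : measure_display) (X : measurableType d) (R : realType)
  (P : probability (X * R)%type R).

Lemma msq (g : X * R -> R) : measurable_fun setT g ->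
  measurable_fun setT ((fun z => (((g z) ^+ 2)%R)%:E) : X * R -> \bar R).
Proof.
move=> mg; apply/measurable_EFinP; exact: measurable_realfun.measurable_funX.
Qed.

Lemma mfst (f : X -> R) : measurable_fun setT f ->
  measurable_fun setT (fun z : X * R => f z.1).
Proof. move=> mf; exact: (measurableT_comp mf measurable_fst). Qed.

Lemma sq_ge0E (x : R) : 0 <= ((x ^+ 2)%R)%:E.
Proof. by rewrite lee_fin sqr_ge0. Qed.

Lemma int_fin (g : X * R -> R) :
  P.-integrable setT (fun z => ((g z ^+ 2)%R)%:E) ->
  \int[P]_z ((((g z) ^+ 2)%R)%:E : \bar R) < +oo.
Proof.
move=> hi; have [mg H] := integrableP _ _ _ hi.
apply: le_lt_trans H; rewrite le_eqVlt; apply/orP; left; apply/eqP.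
by apply: eq_integral => z _; rewrite gee0_abs // sq_ge0E.
Qed.


Lemma MSE_fin (Hy : P.-integrable setT (fun z => ((z.2 ^+ 2)%R)%:E)) f :
  predictor P f -> MSE P f < +oo.
Proof.
move=> [mf hf]; rewrite /MSE.
have my : measurable_fun setT (fun z : X * R => z.2) := measurable_snd.
have mf1 := mfst _ mf.
have H : \int[P]_z (((z.2 - f z.1) ^+ 2)%R)%:E <=
   \int[P]_z (2%:E * ((z.2 ^+ 2)%R)%:E + 2%:E * ((f z.1 ^+ 2)%R)%:E).
  apply: (@ge0_le_integral _ _ _ P setT measurableT).
  - by move=> z _; exact: sq_ge0E.
  - by apply: (msq (fun z => z.2 - f z.1)%R); exact: measurable_funB.
  - apply: emeasurable_funD; apply: emeasurable_funM => //; [exact: (msq (fun z => z.2)) | exact: (msq (fun z => f z.1))].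
  - move=> z _; rewrite -!EFinM -EFinD lee_fin.
    have := sqr_ge0 (z.2 + f z.1)%R. nra.
apply: (le_lt_trans H).
rewrite ge0_integralD //; last 4 first.
- by move=> z _; rewrite mule_ge0 // sq_ge0E.
- apply: emeasurable_funM => //; exact: (msq (fun z => z.2)).
- by move=> z _; rewrite mule_ge0 // sq_ge0E.
- apply: emeasurable_funM => //; exact: (msq (fun z => f z.1)).
rewrite (ge0_integralZl_EFin P measurableT (fun z _ => sq_ge0E _) (msq (fun z => z.2) my)) //.
rewrite (ge0_integralZl_EFin P measurableT (fun z _ => sq_ge0E _) (msq (fun z => f z.1) mf1)) //.
apply: lte_add_pinfty; apply: lte_mul_pinfty => //.
- exact: (int_fin (fun z => z.2) Hy).
- exact: (int_fin (fun z => f z.1) hf).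
Qed.
End Aux.

Theorem lemma2 (d : measure_display) (X : measurableType d) (R : realType)
  (P : probability (X * R)%type R)
  (Hy : P.-integrable setT (fun z => ((z.2 ^+ 2)%R)%:E))
  (F : nat -> set (X -> R))
  (Hpred : forall n, (0 < n)%N -> F n `<=` predictor P)
  (Hnest : forall n, (0 < n)%N -> F n `<=` F n.+1)
  (Hmid : forall n, (0 < n)%N -> forall f1 f2, F n f1 -> F n f2 ->
            F (2 * n)%N (fun x => ((f1 x + f2 x) / 2)%R))
  (n : nat) (hn : (0 < n)%N) (eps : R) (f1 f2 : X -> R)
  (hf1 : F n f1) (hf2 : F n f2)
  (h1 : MSE P f1 <= Risk P (F n) + eps%:E)
  (h2 : MSE P f2 <= Risk P (F n) + eps%:E) :
  Dist P f1 f2 <= 4%:E * (Risk P (F n) - Risk P (F (2 * n)%N) + eps%:E).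
Proof.
have p1 := Hpred n hn _ hf1; have p2 := Hpred n hn _ hf2.
have hn2 : (0 < 2 * n)%N by rewrite muln_gt0.
set g := fun x => ((f1 x + f2 x) / 2)%R.
have hg : F (2 * n)%N g := Hmid n hn _ _ hf1 hf2.
have pg := Hpred _ hn2 _ hg.
have my : measurable_fun setT (fun z : X * R => z.2) := measurable_snd.
have mres : forall f : X -> R, predictor P f ->
    measurable_fun setT (fun z : X * R => (z.2 - f z.1)%R).
  by move=> f [mf _]; apply: measurable_funB => //; exact: mfst.
have mE : forall h : X * R -> R, measurable_fun setT h ->
    measurable_fun setT ((fun z => ((h z ^+ 2)%R)%:E) : X * R -> \bar R).
  by move=> h mh; exact: msq.
have m1 := mE _ (mres _ p1); have m2 := mE _ (mres _ p2); have mg := mE _ (mres _ pg).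
have md : measurable_fun setT (fun z : X * R => (f1 z.1 - f2 z.1)%R).
  by case: p1 => [mf1 _]; case: p2 => [mf2 _]; apply: measurable_funB; exact: mfst.
have mD := mE _ md.
have key : 4%:E * MSE P g + Dist P f1 f2 = 2%:E * MSE P f1 + 2%:E * MSE P f2.
  rewrite /MSE /Dist.
  rewrite -(ge0_integralZl_EFin P measurableT (fun z _ => sq_ge0E _ _) mg) //.
  rewrite -(ge0_integralZl_EFin P measurableT (fun z _ => sq_ge0E _ _) m1) //.
  rewrite -(ge0_integralZl_EFin P measurableT (fun z _ => sq_ge0E _ _) m2) //.
  have nn : forall (k : R) (h : X * R -> R), (0 <= k)%R ->
      forall w, [set: X * R] w -> 0 <= k%:E * ((h w ^+ 2)%R)%:E.
    by move=> k h k0 w _; apply: mule_ge0; [rewrite lee_fin | exact: sq_ge0E].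
  rewrite -(ge0_integralD P measurableT (nn 4%R _ _) (emeasurable_funM _ mg)
     (fun z _ => sq_ge0E _ _) mD) //.
  rewrite -(ge0_integralD P measurableT (nn 2%R _ _) (emeasurable_funM _ m1)
     (nn 2%R _ _) (emeasurable_funM _ m2)) //.
  apply: eq_integral => z _; rewrite -!EFinM -!EFinD; congr EFin.
  by rewrite /g; field.
have M0 : forall f, 0 <= MSE P f by move=> f; apply: integral_ge0 => w _; exact: sq_ge0E.
have D0 : 0 <= Dist P f1 f2 by apply: integral_ge0 => w _; exact: sq_ge0E.
have finM : forall f, predictor P f -> exists r, MSE P f = r%:E.
  move=> f pf; exists (fine (MSE P f)); rewrite fineK // ge0_fin_numE //.
  exact: MSE_fin.
have [a ea] := finM _ p1; have [b eb] := finM _ p2; have [m em] := finM _ pg.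
have Rn1 : Risk P (F n) <= MSE P f1 by apply: ereal_inf_lbound; exists f1.
have Rn0 : 0 <= Risk P (F n) by apply/ereal_infP => _ [f _ <-].
have R21 : Risk P (F (2 * n)%N) <= MSE P g by apply: ereal_inf_lbound; exists g.
have R20 : 0 <= Risk P (F (2 * n)%N) by apply/ereal_infP => _ [f _ <-].
have [rn ern] : exists r, Risk P (F n) = r%:E.
  exists (fine (Risk P (F n))); rewrite fineK // ge0_fin_numE //.
  by apply: (le_lt_trans Rn1); rewrite ea ltey.
have [r2 er2] : exists r, Risk P (F (2 * n)%N) = r%:E.
  exists (fine (Risk P (F (2 * n)%N))); rewrite fineK // ge0_fin_numE //.
  by apply: (le_lt_trans R21); rewrite em ltey.
rewrite ea eb em in key; rewrite ea ern in h1; rewrite eb ern in h2.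
rewrite em er2 in R21; rewrite ern er2.
move: D0 key; case: (Dist P f1 f2) => [c||] //= D0 key.
- rewrite -!EFinM -!EFinD in key; case: key => key.
  rewrite -EFinB -EFinD -EFinM lee_fin.
  rewrite -EFinD lee_fin in h1; rewrite -EFinD lee_fin in h2.
  rewrite lee_fin in R21; rewrite lee_fin in D0.
  clear -key h1 h2 R21 D0.
  move: key h1 h2 R21 D0; rewrite -/(4%:R) -/(2%:R); move=> key h1 h2 R21 D0.
  lra.
Qed.
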